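(* For every $n\ge 2$, it is possible to place $n-1$ queens on an $n\times n$ chessboard whose square $(i,j)$ ($1\le i,j\le n$) is labeled $|i-j|$ so that no two queens attack each other, where two queens attack each other if they lie in the same row, in the same column, or on squares with the same label.
   Context: The chessboard corresponds to the symmetric Toeplitz matrix $T_n$ with entries $t_{ij}=|i-j|$. *)

(* Defs.v *)
From mathcomp Require Import all_boot ssrint.
Set Implicit Arguments. Unset Strict Implicit. Unset Printing Implicit Defensive.

(* Square (i,j) of the n x n board, 0-indexed; the label |i-j| is invariant
   under the shift to 1-indexing. *)
Definition label n (s : 'I_n * 'I_n) : nat := `|(s.1 : nat) - (s.2 : nat)|%N.

Definition attack n (s t : 'I_n * 'I_n) : bool :=
  [|| s.1 == t.1, s.2 == t.2 | label s == label t].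

Definition nonattacking n (Q : {set 'I_n * 'I_n}) : Prop :=
  forall s t, s \in Q -> t \in Q -> s != t -> ~~ attack s t.

(* Main.v *)
Require Import Defs.
From mathcomp Require Import all_boot.
From mathcomp Require Import ssrint zify.

Definition col (n : nat) (a : nat) : nat :=
  if a < n./2 then n.-1 - a else n - 2 - a.

Lemma key (m i j : nat) : i < m.+1 -> j < m.+1 -> i < m -> j < m -> i != j ->
  (col m.+1 i != col m.+1 j) && (`|(i:int) - (col m.+1 i : int)|%N != `|(j:int) - (col m.+1 j : int)|%N).
Proof.
move=> hi' hj' hi hj hij; rewrite /col.
have hh : (m.+1)./2 * 2 <= m.+1 <= (m.+1)./2 * 2 + 1.
  by have := odd_double_half m.+1; rewrite -muln2; case: odd => /=; lia.
move: hh; set h := (m.+1)./2 => hh; clearbody h.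
move/eqP: hij => hij.
case: ifP => h1; case: ifP => h2; apply/andP; split; apply/eqP => E; lia.
Qed.

Theorem theorem3 (n : nat) (hn : 2 <= n) :
  exists Q : {set 'I_n * 'I_n}, #|Q| = n.-1 /\ nonattacking Q.
Proof.
case: n hn => [//|m] hm.
pose f := fun i : 'I_m.+1 => (i, (inord (col m.+1 i) : 'I_m.+1)).
have finj : injective f by move=> i j [].
have hv : forall i : 'I_m.+1, (inord (col m.+1 i) : 'I_m.+1) = col m.+1 i :> nat.
  move=> i; rewrite inordK //; rewrite /col; case: ifP => _; lia.
exists (f @: [set i : 'I_m.+1 | i < m]); split.
  rewrite card_imset //.
  have -> : [set i : 'I_m.+1 | i < m] = [set~ ord_max].
    apply/setP => i; rewrite !inE; apply/idP/idP.
      by move=> h; apply/eqP => E; rewrite E /= ltnn in h.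
    move=> h; have := ltn_ord i; rewrite ltnS leq_eqVlt; case/orP => // /eqP E.
    by case/eqP: h; apply/val_inj.
  by rewrite cardsC1 card_ord.
move=> s t /imsetP [i]; rewrite inE => hi -> /imsetP [j]; rewrite inE => hj ->.
move=> hne; have hij : (i : nat) != j.
  by apply: contra hne => /eqP /val_inj ->.
have hc := @key m i j (ltn_ord i) (ltn_ord j) hi hj hij.
rewrite /attack /label /= -[inord (col m.+1 i) == _](inj_eq val_inj) /= !hv.
by rewrite negb_or negb_or hij.
Qed.
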